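(* Let $p\ge2$, $n\ge p$, and $\boldsymbol d\in\mathcal S_p$ with $D=\mathrm{diag}(\boldsymbol d)$. Then for each $i=1,\dots,p$, $$0<\frac{\partial}{\partial d_i}\,{}_0F_1\!\left(\tfrac n2,\tfrac{D^2}{4}\right)<{}_0F_1\!\left(\tfrac n2,\tfrac{D^2}{4}\right).$$
   Context: $\mathcal S_p=\{(d_1,\dots,d_p):0<d_p<\cdots<d_1<\infty\}$. $\mathcal V_{n,p}=\{X\in\mathbb R^{n\times p}:X^TX=I_p\}$ with normalized Haar probability measure $[dX]$. For diagonal $D$ with diagonal $\boldsymbol d$, ${}_0F_1\!\left(\tfrac n2,\tfrac{D^2}{4}\right)=\int_{\mathcal V_{n,p}}\exp\big(\sum_{j=1}^p d_jX_{jj}\big)[dX]$. *)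

(* Defs.v *)
From HB Require Import structures.
From mathcomp Require Import all_boot all_order all_algebra.
From mathcomp Require Import all_classical all_reals all_analysis.
Set Implicit Arguments. Unset Strict Implicit. Unset Printing Implicit Defensive.
Import Order.TTheory GRing.Theory Num.Theory.
Import numFieldNormedType.Exports.
Local Open Scope classical_set_scope.
Local Open Scope ring_scope.

Definition mxBorel (R : realType) (n p : nat) :=
  g_sigma_algebraType (@open 'M[R]_(n, p)).

Definition stiefel (R : realType) (n p : nat) : set (mxBorel R n p) :=
  [set X : 'M[R]_(n, p) | X^T *m X = 1%:M].

Definition orthogonal_mx (R : realType) (n : nat) (Q : 'M[R]_n) : Prop :=
  Q^T *m Q = 1%:M.

Definition is_haar_stiefel (R : realType) (n p : nat)
    (mu : probability (mxBorel R n p) R) : Prop :=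
  mu (@stiefel R n p) = 1%E /\
  forall (Q : 'M[R]_n), orthogonal_mx Q ->
    forall A : set (mxBorel R n p), measurable A ->
      mu ((fun X : 'M[R]_(n, p) => Q *m X) @^-1` A) = mu A.

Definition diag_pairing (R : realType) (n p : nat) (d : 'rV[R]_p)
    (X : 'M[R]_(n, p)) : R :=
  \sum_(i < n) \sum_(j < p | (i : nat) == (j : nat)) d 0 j * X i j.

(* 0F1(n/2, D^2/4) = \int_{V_{n,p}} exp(sum_j d_j X_jj) [dX], as a function of d *)
Definition hyp0F1 (R : realType) (n p : nat)
    (mu : probability (mxBorel R n p) R) (d : 'rV[R]_p) : R :=
  Rintegral mu setT (fun X : mxBorel R n p => expR (diag_pairing d X)).

(* d in S_p : 0 < d_p < ... < d_1 (0-indexed: d_0 > d_1 > ... > d_{p-1} > 0) *)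
Definition in_Sp (R : realType) (p : nat) (d : 'rV[R]_p) : Prop :=
  (forall j : 'I_p, 0 < d 0 j) /\
  (forall j k : 'I_p, (j < k)%N -> d 0 k < d 0 j).

(* i-th standard basis row vector; partial derivative w.r.t. d_i is the
   directional derivative along it *)
Definition e_ (R : realType) (p : nat) (i : 'I_p) : 'rV[R]_p := delta_mx 0 i.

(* Main.v *)
Require Import Defs.
From HB Require Import structures.
From mathcomp Require Import all_boot all_order all_algebra.
From mathcomp Require Import all_classical all_reals all_analysis.
From mathcomp Require Import ring lra.
From mathcomp Require Import measurable_realfun.
From mathcomp Require Import fingroup perm.
Import Order.TTheory GRing.Theory Num.Theory.
Import numFieldNormedType.Exports.
Local Open Scope classical_set_scope.
Local Open Scope ring_scope.

Lemma cont_meas_R {R : realType} {n p : nat} (f : 'M[R]_(n, p) -> R) :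
  continuous f -> measurable_fun setT (f : mxBorel R n p -> R).
Proof.
move=> /continuousP cf; apply: (measurability _ (RGenOpens.measurableE R)).
move=> _ [_ [a [b ->] <-]]; rewrite setTI.
apply: sub_sigma_algebra; exact/cf/interval_open.
Qed.

Lemma cont_meas_M {R : realType} {n p : nat} (f : 'M[R]_(n, p) -> 'M[R]_(n, p)) :
  continuous f -> measurable_fun setT (f : mxBorel R n p -> mxBorel R n p).
Proof.
move=> /continuousP cf.
have := (@measurability _ _ (mxBorel R n p) (mxBorel R n p) setT f (@open 'M[R]_(n, p)) (erefl _)).
apply.
move=> _ [B oB <-]; rewrite setTI.
apply: sub_sigma_algebra; exact/cf.
Qed.

Lemma coord_meas {R : realType} {n p : nat} a b :
  measurable_fun setT (fun X : mxBorel R n p => X a b : R).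
Proof. apply: cont_meas_R; exact: coord_continuous. Qed.

Lemma stiefel_col {R : realType} {n p : nat} (X : 'M[R]_(n,p)) c :
  X^T *m X = 1%:M -> \sum_(k < n) X k c ^+ 2 = 1.
Proof.
move=> h; have := congr1 (fun M : 'M[R]_p => M c c) h; rewrite !mxE eqxx /= => e; apply: etrans e.
by apply: eq_bigr => k _; rewrite mxE expr2.
Qed.

Lemma stiefel_entry {R : realType} {n p : nat} (X : 'M[R]_(n,p)) k c :
  X^T *m X = 1%:M -> `|X k c| <= 1.
Proof.
move=> h; have := stiefel_col X c h; rewrite (bigD1 k) //= => e.
have s0 : 0 <= \sum_(j < n | j != k) X j c ^+ 2.
  by apply: sumr_ge0 => *; exact: sqr_ge0.
move: e s0; set s := \sum_(_ < _ | _) _ => e s0.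
rewrite ler_norml; apply/andP; split; nra.
Qed.

Lemma diag_pairingE {R : realType} {n p : nat} (hpn : (p <= n)%N) (d : 'rV[R]_p) (X : 'M[R]_(n,p)) :
  diag_pairing d X = \sum_(j < p) d 0 j * X (widen_ord hpn j) j.
Proof.
rewrite /diag_pairing (eq_bigr (fun a : 'I_n => \sum_(j < p)
   (if (a:nat) == j then d 0 j * X a j else 0))); last first.
  by move=> a _; rewrite big_mkcond.
rewrite exchange_big /=; apply: eq_bigr => j _.
rewrite (bigD1 (widen_ord hpn j)) //= eqxx big1 ?addr0 // => a ha.
case: eqP => // h; exfalso; move/negP: ha; apply; apply/eqP/val_inj; exact: h.
Qed.

Lemma diag_pairing_lin {R : realType} {n p : nat} (hpn : (p <= n)%N) (h : R) (v d : 'rV[R]_p) (X : 'M[R]_(n,p)) :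
  diag_pairing (h *: v + d) X = h * diag_pairing v X + diag_pairing d X.
Proof.
rewrite !(diag_pairingE hpn) mulr_sumr -big_split; apply: eq_bigr => j _.
by rewrite !mxE /= mulrDl mulrA.
Qed.

Lemma diag_pairing_e {R : realType} {n p : nat} (hpn : (p <= n)%N) (i : 'I_p) (X : 'M[R]_(n,p)) :
  diag_pairing (@e_ R p i) X = X (widen_ord hpn i) i.
Proof.
rewrite (diag_pairingE hpn) (bigD1 i) //= big1 ?addr0.
  by rewrite /e_ mxE !eqxx mul1r.
by move=> j hj; rewrite /e_ mxE eqxx (negbTE hj) mul0r.
Qed.

Lemma diag_pairing_bound {R : realType} {n p : nat} (hpn : (p <= n)%N) (d : 'rV[R]_p) (X : 'M[R]_(n,p)) :
  X^T *m X = 1%:M -> `|diag_pairing d X| <= \sum_(j < p) `|d 0 j|.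
Proof.
move=> hX; rewrite (diag_pairingE hpn); apply: le_trans (ler_norm_sum _ _ _) _.
apply: ler_sum => j _; rewrite normrM -[leRHS]mulr1 ler_wpM2l //.
exact: stiefel_entry.
Qed.

Lemma meas_diag {R : realType} {n p : nat} (d : 'rV[R]_p) :
  measurable_fun setT (fun X : mxBorel R n p => diag_pairing d X).
Proof.
rewrite /diag_pairing; apply: measurable_sum => a.
under eq_fun do rewrite big_mkcond /=.
apply: measurable_sum => j; case: (_ == _).
  exact: measurable_funM (measurable_cst _) (coord_meas _ _).
exact: measurable_cst.
Qed.

Lemma meas_stiefel {R : realType} {n p : nat} : measurable (@stiefel R n p).
Proof.
pose H := fun X : mxBorel R n p => \sum_(a < p) \sum_(b < p)
   ((X^T *m X) a b - (1%:M : 'M[R]_p) a b) ^+ 2.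
have mH : measurable_fun setT H.
  apply: measurable_sum => a; apply: measurable_sum => b.
  apply: measurable_funX; apply: measurable_funB; last exact: measurable_cst.
  under eq_fun do rewrite mxE.
  apply: measurable_sum => k; under eq_fun do rewrite mxE.
  exact: measurable_funM (coord_meas _ _) (coord_meas _ _).
have -> : @stiefel R n p = setT `&` H @^-1` [set 0].
  rewrite setTI; apply/seteqP; split => X /=.
    rewrite /stiefel /= => hX; rewrite /H big1 // => a _; rewrite big1 // => b _.
    have := congr1 (fun M : 'M[R]_p => M a b) hX => /= ->.
    by rewrite subrr expr0n.
  rewrite /H => /eqP; rewrite psumr_eq0; last by move=> a _; apply: sumr_ge0 => b _; exact: sqr_ge0.
  move=> /allP hall; apply/matrixP => a b.
  have /implyP := hall a (mem_index_enum a) => /(_ isT).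
  rewrite psumr_eq0; last by move=> *; exact: sqr_ge0.
  move=> /allP /(_ b (mem_index_enum b)) /implyP /(_ isT).
  by rewrite sqrf_eq0 subr_eq0 => /eqP.
by apply: mH.
Qed.
Lemma mx_cont_entries (R : realType) (m q n p : nat)
  (f : 'M[R]_(m, q) -> 'M[R]_(n, p)) :
  (forall a b, continuous (fun X => f X a b)) -> continuous f.
Proof.
move=> cf X A [P hP sPA].
have : \forall Y \near X, forall ab : 'I_n * 'I_p, P ab.1 ab.2 (f Y ab.1 ab.2).
  apply: (@filter_forall _ _ (fun ab Y => P ab.1 ab.2 (f Y ab.1 ab.2)) (nbhs X) _) => -[a b] /=.
  have := cf a b X (P a b) (hP a b). exact.
apply: filterS => Y HY; apply: sPA => a b; exact: (HY (a, b)).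
Qed.

Lemma int_T_S {R : realType} {n p : nat} (mu : probability (mxBorel R n p) R)
  (S : set (mxBorel R n p)) :
  measurable S -> mu S = 1%E -> forall f : mxBorel R n p -> R,
  measurable_fun setT f ->
  \int[mu]_(x in setT) f x = \int[mu]_(x in S) f x.
Proof.
move=> mS muS f mf.
have muC : mu (~` S) = 0%E by rewrite probability_setC // muS subee.
have mfE : measurable_fun setT (EFin \o f) by exact/measurable_EFinP.
rewrite /Rintegral; congr fine.
rewrite integralE [in RHS]integralE.
have eS : setT `\` ~` S = S by rewrite setDE setCK setTI.
congr (_ - _)%E.
- rewrite (ge0_negligible_integral _ (N := ~` S)) ?eS //;
    try exact: measurableC; try exact: measurable_funepos;
    by move=> x _; exact: funepos_ge0.
- rewrite (ge0_negligible_integral _ (N := ~` S)) ?eS //;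
    try exact: measurableC; try exact: measurable_funeneg;
    by move=> x _; exact: funeneg_ge0.
Qed.

Lemma int_bdd {R : realType} {n p : nat} (mu : probability (mxBorel R n p) R)
  (S : set (mxBorel R n p)) (f : mxBorel R n p -> R) :
  measurable S -> measurable_fun setT f ->
  (exists M, forall x, S x -> `|f x| <= M) -> mu.-integrable S (EFin \o f).
Proof.
move=> mS mf [M hM]; apply: measurable_bounded_integrable => //.
- by apply: le_lt_trans (probability_le1 _ mS) _; rewrite ltry.
- exact: measurable_funTS.
- exists M; split; first exact: num_real.
  by move=> M' hM' x Sx; apply: le_trans (hM x Sx) (ltW hM').
Qed.

Lemma expR_bound {R : realType} (t : R) :
  `|expR t - 1 - t| <= t ^+ 2 * expR `|t|.
Proof.
have h1 := expR_ge1Dx t.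
have h2 := expR_ge1Dx (- t).
have e0 : 0 < expR t := expR_gt0 t.
have eN : expR (- t) * expR t = 1 by rewrite -expRD addNr expR0.
have h3 : expR t - 1 - t <= t * (expR t - 1) by nra.
have h0 : 0 <= expR t - 1 - t by lra.
rewrite ger0_norm //; apply: le_trans h3 _.
have h6 : expR t * (1 - t) <= 1.
  have := ler_wpM2l (ltW e0) h2; rewrite [X in _ <= X]mulrC eN => h; lra.
have [t0|t0] := leP 0 t.
  rewrite ger0_norm //.
  have := ler_wpM2l t0 h6; nra.
rewrite ltr0_norm //.
have h4 := expR_ge1Dx (- t); have h5 : 1 <= expR (- t).
  by rewrite -expR0 ler_expR; lra.
nra.
Qed.

Lemma meas_exp_diag {R : realType} {n p : nat} (d : 'rV[R]_p) :
  measurable_fun setT (fun X : mxBorel R n p => expR (diag_pairing d X)).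
Proof. apply: measurableT_comp; [exact: measurable_expR | exact: meas_diag]. Qed.

Lemma intRB {R : realType} {n p : nat} (mu : probability (mxBorel R n p) R)
  (S : set (mxBorel R n p)) (f g : mxBorel R n p -> R) : measurable S ->
  mu.-integrable S (EFin \o f) -> mu.-integrable S (EFin \o g) ->
  mu.-integrable S (EFin \o (fun x => f x - g x)).
Proof.
move=> mS hf hg; apply: (eq_integrable mS _ _ _ (integrableB mS hf hg)) => x _ /=.
by rewrite EFinB.
Qed.

Lemma intRZ {R : realType} {n p : nat} (mu : probability (mxBorel R n p) R)
  (S : set (mxBorel R n p)) (f : mxBorel R n p -> R) (c : R) : measurable S ->
  mu.-integrable S (EFin \o f) ->
  mu.-integrable S (EFin \o (fun x => c * f x)).
Proof.
move=> mS hf; apply: (eq_integrable mS _ _ _ (integrableZl mS c hf)) => x _ /=.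
by rewrite EFinM.
Qed.

Lemma deriv_part {R : realType} {n p : nat} (hpn : (p <= n)%N)
  (mu : probability (mxBorel R n p) R) (muS : mu (@stiefel R n p) = 1%E)
  (d : 'rV[R]_p) (i : 'I_p) :
  (fun h : R => h^-1 *: ((hyp0F1 mu \o shift d) (h *: @e_ R p i) - hyp0F1 mu d))
    @ 0^' -->
  \int[mu]_(X in @stiefel R n p)
     (diag_pairing (@e_ R p i) X * expR (diag_pairing d X)).
Proof.
set S := @stiefel R n p.
have mS : measurable S := meas_stiefel.
set y := fun X : mxBorel R n p => diag_pairing (@e_ R p i) X.
set P := fun X : mxBorel R n p => diag_pairing d X.
set B : R := \sum_(j < p) `|d 0 j|.
have my : measurable_fun setT y := meas_diag _.
have mP : measurable_fun setT P := meas_diag _.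
have yb : forall X, S X -> `|y X| <= 1.
  by move=> X SX; rewrite /y (diag_pairing_e hpn); exact: stiefel_entry.
have Pb : forall X, S X -> `|P X| <= B.
  by move=> X SX; exact: diag_pairing_bound.
have FE : forall v, hyp0F1 mu v = \int[mu]_(X in S) expR (diag_pairing v X).
  by move=> v; rewrite /hyp0F1 (int_T_S _ _ mS muS) //; exact: meas_exp_diag.
have iexpP : mu.-integrable S (EFin \o (fun X => expR (P X))).
  apply: int_bdd => //; first exact: meas_exp_diag.
  exists (expR B) => X SX; rewrite ger0_norm ?expR_ge0 // ler_expR.
  by apply: le_trans (Pb X SX); exact: ler_norm.
have iyexpP : mu.-integrable S (EFin \o (fun X => y X * expR (P X))).
  apply: int_bdd => //; first exact: measurable_funM my (meas_exp_diag d).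
  exists (expR B) => X SX; rewrite normrM (ger0_norm (expR_ge0 _)).
  rewrite -[leRHS]mul1r; apply: ler_pM => //; first exact: (yb X SX).
  by rewrite ler_expR; apply: le_trans (Pb X SX); exact: ler_norm.
have iexph : forall h : R, mu.-integrable S (EFin \o (fun X => expR (h * y X + P X))).
  move=> h; apply: int_bdd => //.
    apply: measurableT_comp; first exact: measurable_expR.
    exact: measurable_funD (measurable_funM (measurable_cst _) my) mP.
  exists (expR (`|h| + B)) => X SX; rewrite ger0_norm ?expR_ge0 // ler_expR.
  apply: le_trans (ler_norm _) _; apply: le_trans (ler_normD _ _) _.
  apply: lerD (Pb X SX); rewrite normrM -[leRHS]mulr1 ler_wpM2l //; exact: yb.
set C := expR B * expR 1.
have C0 : 0 < C by rewrite mulr_gt0 // expR_gt0.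
have key : forall h : R, h != 0 -> `|h| <= 1 ->
    `|\int[mu]_(X in S) (y X * expR (P X)) -
      h^-1 *: ((hyp0F1 mu \o shift d) (h *: @e_ R p i) - hyp0F1 mu d)| <= `|h| * C.
  move=> h h0 h1.
  rewrite /= !FE.
  under eq_Rintegral do rewrite (diag_pairing_lin hpn).
  rewrite -/S.
  set k := fun X => expR (h * y X + P X) - expR (P X) - h * (y X * expR (P X)).
  have ik : mu.-integrable S (EFin \o k).
    exact: (intRB _ _ _ _ mS (intRB _ _ _ _ mS (iexph h) iexpP) (intRZ _ _ _ h mS iyexpP)).
  have eK : \int[mu]_(X in S) expR (h * y X + P X) - \int[mu]_(X in S) expR (P X)
      - h * \int[mu]_(X in S) (y X * expR (P X)) = \int[mu]_(X in S) k X.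
    rewrite -RintegralZl // -RintegralB // -RintegralB //.
      exact: (intRB _ _ _ _ mS (iexph h) iexpP).
    exact: (intRZ _ _ _ h mS iyexpP).
  have -> : \int[mu]_(X in S) (y X * expR (P X)) -
      h^-1 *: (\int[mu]_(X in S) expR (h * y X + P X) - \int[mu]_(X in S) expR (P X))
      = - (h^-1 * \int[mu]_(X in S) k X).
    rewrite -eK /=; set a := \int[mu]_(X in S) _; set b := \int[mu]_(X in S) _;
      set c := \int[mu]_(X in S) _.
    have -> : h^-1 *: (b - c) = h^-1 * (b - c) by [].
    field. exact: h0.
  have kb : forall X, S X -> `|k X| <= h ^+ 2 * C.
    move=> X SX.
    have -> : k X = expR (P X) * (expR (h * y X) - 1 - h * y X).
      by rewrite /k expRD; ring.
    rewrite normrM (ger0_norm (expR_ge0 _)).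
    apply: le_trans (ler_wpM2l (expR_ge0 _) (expR_bound _)) _.
    have yX := yb X SX; move: yX; rewrite ler_norml => /andP[ya yb'].
    have y2 : y X ^+ 2 <= 1 by nra.
    have t2 : (h * y X) ^+ 2 <= h ^+ 2.
      by rewrite exprMn -[leRHS]mulr1 ler_wpM2l ?sqr_ge0.
    have et : expR `|h * y X| <= expR 1.
      rewrite ler_expR normrM -[leRHS]mulr1; apply: ler_pM => //.
      exact: (yb X SX).
    have eP : expR (P X) <= expR B.
      by rewrite ler_expR; apply: le_trans (Pb X SX); exact: ler_norm.
    rewrite /C mulrCA; apply: ler_pM => //; first exact: sqr_ge0.
    by apply: ler_pM => //; rewrite ?expR_ge0.
  have icst : forall c : R, mu.-integrable S (EFin \o (fun _ : mxBorel R n p => c)).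
    move=> c; apply: int_bdd => //.
    by exists `|c| => X _.
  have muS1 : fine (mu S) = 1 by rewrite muS.
  have kI : `|\int[mu]_(X in S) k X| <= h ^+ 2 * C.
    rewrite ler_norml; apply/andP; split.
      rewrite -[X in X <= _]mulr1 -muS1 -Rintegral_cst //.
      apply: le_Rintegral => // X SX.
      by have := kb X SX; rewrite ler_norml => /andP[].
    rewrite -[X in _ <= X]mulr1 -muS1 -Rintegral_cst //.
    apply: le_Rintegral => // X SX.
    by have := kb X SX; rewrite ler_norml => /andP[].
  rewrite normrN normrM normfV.
  have hp : 0 < `|h| by rewrite normr_gt0.
  rewrite ler_pdivrMl // mulrA -expr2 real_normK ?num_real //.
apply/cvgrPdist_le => eps eps0.
near=> h.
have h0 : h != 0 by near: h; exact: nbhs_dnbhs_neq.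
have hm : `|h| < Num.min 1 (eps / C) by near: h; apply: dnbhs0_lt; rewrite lt_min ltr01 divr_gt0.
move: hm; rewrite lt_min => /andP[hm1 hm2].
apply: le_trans (key h h0 (ltW hm1)) _.
by rewrite -ler_pdivlMr // ltW.
Unshelve. all: by end_near.
Qed.

Lemma cont_sum {R : realType} {n p : nat} (I : Type) (s : seq I)
  (F : I -> 'M[R]_(n,p) -> R) :
  (forall k, continuous (F k)) -> continuous (fun X => \sum_(k <- s) F k X).
Proof.
move=> cF; elim: s => [|k s ih].
  under eq_fun do rewrite big_nil; exact: cst_continuous.
under eq_fun do rewrite big_cons.
move=> X; exact: (cvgD (cF k X) (ih X)).
Qed.

Lemma mulQ_cont {R : realType} {n p : nat} (Q : 'M[R]_n) :
  continuous (fun X : 'M[R]_(n,p) => Q *m X).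
Proof.
apply: mx_cont_entries => a b.
under eq_fun do rewrite mxE.
apply: cont_sum => k X.
exact: (cvgM (cvg_cst (Q a k)) (@coord_continuous _ _ _ k b X)).
Qed.

Definition mulQ {R : realType} {n p : nat} (Q : 'M[R]_n) :
  mxBorel R n p -> mxBorel R n p := fun X => Q *m X.

Lemma mulQ_meas {R : realType} {n p : nat} (Q : 'M[R]_n) :
  measurable_fun setT (@mulQ R n p Q).
Proof. exact: cont_meas_M (mulQ_cont Q). Qed.

Lemma stiefel_inv {R : realType} {n p : nat} (Q : 'M[R]_n) :
  orthogonal_mx Q ->
  (@mulQ R n p Q) @^-1` (@stiefel R n p) = @stiefel R n p.
Proof.
move=> hQ; apply/seteqP; split => X /=; rewrite /stiefel /=.
  by rewrite trmx_mul -mulmxA (mulmxA Q^T) hQ mul1mx.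
by rewrite trmx_mul -mulmxA (mulmxA Q^T) hQ mul1mx.
Qed.

Lemma int_inv {R : realType} {n p : nat} (mu : probability (mxBorel R n p) R)
  (hmu : is_haar_stiefel mu) (Q : 'M[R]_n) (hQ : orthogonal_mx Q)
  (g : mxBorel R n p -> R) : measurable_fun setT g ->
  (exists M, forall X, @stiefel R n p X -> `|g X| <= M) ->
  \int[mu]_(X in @stiefel R n p) g (Q *m X) = \int[mu]_(X in @stiefel R n p) g X.
Proof.
move=> mg [M hM].
have mphi := @mulQ_meas R n p Q.
have mgE : measurable_fun setT (EFin \o g) by exact/measurable_EFinP.
have intf : mu.-integrable ((@mulQ R n p Q) @^-1` (@stiefel R n p))
    ((EFin \o g) \o (@mulQ R n p Q)).
  rewrite (@stiefel_inv R n p Q hQ); apply: (int_bdd _ _ (fun X => g (Q *m X))).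
  - exact: meas_stiefel.
  - exact: measurableT_comp mg mphi.
  - exists M => X SX; apply: hM.
    have := @stiefel_inv R n p Q hQ; move/seteqP => [_ h2]; exact: (h2 X SX).
have eqI := integral_pushforward mphi mgE intf meas_stiefel.
rewrite /Rintegral; congr fine.
rewrite [RHS](eq_measure_integral (pushforward mu (@mulQ R n p Q))).
  by rewrite eqI (@stiefel_inv R n p Q hQ).
by move=> A mA _; symmetry; exact: (hmu.2 Q hQ A mA).
Qed.

Lemma ae_transport {R : realType} {n p : nat} (mu : probability (mxBorel R n p) R)
  (hmu : is_haar_stiefel mu) (Q : 'M[R]_n) (hQ : orthogonal_mx Q)
  (Pr : mxBorel R n p -> Prop) :
  (\forall X \ae mu, Pr X) -> \forall X \ae mu, Pr (Q *m X).
Proof.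
move=> [N [mN N0 sub]]; exists (@mulQ R n p Q @^-1` N); split.
- by have := @mulQ_meas R n p Q measurableT N mN; rewrite setTI.
- by rewrite -N0; exact: (hmu.2 Q hQ N mN).
- by move=> X /= hX; apply: sub.
Qed.

Lemma ae_S_false {R : realType} {n p : nat} (mu : probability (mxBorel R n p) R)
  (S : set (mxBorel R n p)) : measurable S -> mu S = 1%E ->
  ~ (\forall X \ae mu, ~ S X).
Proof.
move=> mS muS [N [mN N0 sub]].
have : (mu S <= mu N)%E.
  have hle := @le_measure _ _ _ mu S N (mem_set mS) (mem_set mN).
  apply: hle.
  by move=> X SX; apply: sub => /= h; exact: h SX.
by rewrite muS N0 lee_fin ler10.
Qed.

Lemma Rint_eq0_ae {R : realType} {n p : nat} (mu : probability (mxBorel R n p) R)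
  (S : set (mxBorel R n p)) (k : mxBorel R n p -> R) :
  measurable S -> measurable_fun setT k -> mu.-integrable S (EFin \o k) ->
  (forall X, S X -> 0 <= k X) -> \int[mu]_(X in S) k X = 0 ->
  \forall X \ae mu, S X -> k X = 0.
Proof.
move=> mS mk ik k0 I0.
have mkE : measurable_fun S (EFin \o k).
  by apply: measurable_funTS; exact/measurable_EFinP.
have := (ae_eq_integral_abs mu mS mkE).1.
move=> /(_ _)/= h.
have : \forall X \ae mu, S X -> (EFin \o k) X = cst 0 X.
  apply: h.
  rewrite (eq_integral (fun X => (k X)%:E)); last first.
    by move=> X; rewrite in_setE => SX; rewrite ger0_norm // k0.
  have := integrable_fin_num mS ik; rewrite /Rintegral in I0.
  by move/fineK => <-; rewrite I0.
apply: filterS => X h1 SX; by have := h1 SX; rewrite /= => -[].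
Qed.

Lemma kpos {R : realType} (y P c : R) : 0 < c ->
  0 <= y * (expR P - expR (P - 2 * c * y)) /\
  (y != 0 -> 0 < y * (expR P - expR (P - 2 * c * y))).
Proof.
move=> c0; case: (ltrgtP y 0) => [y0|y0|->].
- have : expR P < expR (P - 2 * c * y) by rewrite ltr_expR; nra.
  move=> h; split; [|move=> _]; nra.
- have : expR (P - 2 * c * y) < expR P by rewrite ltr_expR; nra.
  move=> h; split; [|move=> _]; nra.
- by rewrite mul0r; split => //; rewrite eqxx.
Qed.

Definition flipv {R : realType} {n : nat} (i' : 'I_n) : 'rV[R]_n :=
  \row_(a < n) (if a == i' then -1 else 1).

Lemma flip_entry {R : realType} {n p : nat} (i' : 'I_n) (X : 'M[R]_(n,p)) a b :
  (diag_mx (flipv i') *m X) a b = (if a == i' then -1 else 1) * X a b.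
Proof. by rewrite mul_diag_mx !mxE. Qed.

Lemma flip_orth {R : realType} {n : nat} (i' : 'I_n) :
  orthogonal_mx (diag_mx (@flipv R n i')).
Proof.
rewrite /orthogonal_mx tr_diag_mx; apply/matrixP => a b.
rewrite flip_entry !mxE.
case: (eqVneq a b) => [->|ab]; last by rewrite mulr0n mulr0.
by rewrite mulr1n; case: (_ == _); rewrite ?mulN1r ?opprK ?mulr1.
Qed.

Lemma swap_orth {R : realType} {n : nat} (a i' : 'I_n) :
  orthogonal_mx (perm_mx (tperm a i') : 'M[R]_n).
Proof. by rewrite /orthogonal_mx tr_perm_mx -perm_mxM mulVg perm_mx1. Qed.

Lemma swap_entry {R : realType} {n p : nat} (a i' : 'I_n) (X : 'M[R]_(n,p)) c :
  (perm_mx (tperm a i') *m X) i' c = X a c.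
Proof. by rewrite -row_permE mxE tpermR. Qed.

Lemma Sinv {R : realType} {n p : nat} (Q : 'M[R]_n) : orthogonal_mx Q ->
  forall X : mxBorel R n p, @stiefel R n p X -> @stiefel R n p (Q *m X).
Proof.
move=> hQ X SX; have := @stiefel_inv R n p Q hQ; move/seteqP => [_ h].
exact: h X SX.
Qed.

Theorem lemma5 (R : realType) (n p : nat) (hp : (2 <= p)%N) (hnp : (p <= n)%N)
  (mu : probability (mxBorel R n p) R) (hmu : is_haar_stiefel mu)
  (d : 'rV[R]_p) (hd : in_Sp d) (i : 'I_p) :
  derivable (hyp0F1 mu) d (@e_ R p i) /\
  0 < 'D_(@e_ R p i) (hyp0F1 mu) d /\
  'D_(@e_ R p i) (hyp0F1 mu) d < hyp0F1 mu d.
Proof.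
set S := @stiefel R n p.
have mS : measurable S := meas_stiefel.
have muS : mu S = 1%E := hmu.1.
have FF : Filter (almost_everywhere mu) := ae_filter_ringOfSetsType mu.
have FF' : Filter (nbhs (almost_everywhere mu)) := ae_filter_ringOfSetsType mu.
have hcvg := deriv_part hnp mu muS d i.
split; first exact: cvgP hcvg.
set i' := widen_ord hnp i.
set y := fun X : mxBorel R n p => diag_pairing (@e_ R p i) X.
set P := fun X : mxBorel R n p => diag_pairing d X.
set B : R := \sum_(j < p) `|d 0 j|.
have -> : 'D_(@e_ R p i) (hyp0F1 mu) d =
    \int[mu]_(X in S) (y X * expR (P X)) by exact: cvg_lim hcvg.
have yE : forall X, y X = X i' i := fun X => diag_pairing_e hnp i X.
have my : measurable_fun setT y := meas_diag _.
have mP : measurable_fun setT P := meas_diag _.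
have mexpP : measurable_fun setT (fun X => expR (P X)) := meas_exp_diag d.
have yb : forall X, S X -> `|y X| <= 1.
  by move=> X SX; rewrite yE; exact: stiefel_entry.
have Pb : forall X, S X -> `|P X| <= B.
  by move=> X SX; exact: diag_pairing_bound.
have ePb : forall X, S X -> expR (P X) <= expR B.
  by move=> X SX; rewrite ler_expR; apply: le_trans (Pb X SX); exact: ler_norm.
have mg : measurable_fun setT (fun X => y X * expR (P X)) := measurable_funM my mexpP.
have gb : exists M, forall X, S X -> `|y X * expR (P X)| <= M.
  exists (expR B) => X SX; rewrite normrM (ger0_norm (expR_ge0 _)).
  rewrite -[leRHS]mul1r; apply: ler_pM => //; [exact: (yb X SX)|exact: ePb].
have ig : mu.-integrable S (EFin \o (fun X => y X * expR (P X))) := int_bdd _ _ _ mS mg gb.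
have di0 : 0 < d 0 i := hd.1 i.
set Qf : 'M[R]_n := diag_mx (flipv i').
have hQf : orthogonal_mx Qf := flip_orth i'.
have yQ : forall X : mxBorel R n p, y (Qf *m X) = - y X.
  by move=> X; rewrite !yE flip_entry eqxx mulN1r.
have PQ : forall X : mxBorel R n p, P (Qf *m X) = P X - 2 * d 0 i * y X.
  move=> X; rewrite /P !(diag_pairingE hnp) yE (bigD1 i) //= [in RHS](bigD1 i) //=.
  rewrite flip_entry eqxx.
  have -> : \sum_(j < p | j != i) d 0 j * (Qf *m X) (widen_ord hnp j) j =
      \sum_(j < p | j != i) d 0 j * X (widen_ord hnp j) j.
    apply: eq_bigr => j hj; rewrite flip_entry; case: eqP => [h|_]; last by rewrite mul1r.
    exfalso; move/negP: hj; apply; apply/eqP/val_inj.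
    by have := congr1 val h.
  rewrite -/i'; ring.
have Ginv := int_inv mu hmu Qf hQf _ mg gb.
set k := fun X : mxBorel R n p => y X * expR (P X) + y (Qf *m X) * expR (P (Qf *m X)).
have kE : forall X, k X = y X * (expR (P X) - expR (P X - 2 * d 0 i * y X)).
  by move=> X; rewrite /k yQ PQ; ring.
have mk : measurable_fun setT k.
  exact: (measurable_funD mg (measurableT_comp mg (mulQ_meas Qf))).
have igQ : mu.-integrable S (EFin \o (fun X => y (Qf *m X) * expR (P (Qf *m X)))).
  apply: int_bdd => //; first exact: measurableT_comp mg (mulQ_meas Qf).
  have [M hM] := gb; exists M => X SX; apply: hM; exact: Sinv.
have ik : mu.-integrable S (EFin \o k).
  apply: (eq_integrable mS _ _ _ (integrableD mS ig igQ)) => X _ /=.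
  by rewrite EFinD.
have k0 : forall X, S X -> 0 <= k X.
  by move=> X _; rewrite kE; exact: (kpos (y X) (P X) _ di0).1.
have GE : \int[mu]_(X in S) k X = 2 * \int[mu]_(X in S) (y X * expR (P X)).
  rewrite /k RintegralD //.
  rewrite (int_inv mu hmu Qf hQf (fun X => y X * expR (P X)) mg gb); ring.
have Gge0 : 0 <= \int[mu]_(X in S) (y X * expR (P X)).
  have := Rintegral_ge0 mu k0; rewrite GE; nra.
split.
  rewrite lt_neqAle Gge0 andbT; apply/eqP => G0.
  have I0 : \int[mu]_(X in S) k X = 0 by rewrite GE -G0 mulr0.
  have ae0 := Rint_eq0_ae mu S k mS mk ik k0 I0.
  have ae1 : \forall X \ae mu, S X -> X i' i = 0.
    apply: filterS ae0 => X h SX; have := h SX; rewrite kE => hk.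
    apply/eqP; rewrite -yE; apply: contraLR isT => hy.
    have := (kpos (y X) (P X) _ di0).2 hy; rewrite hk ltxx.
    done.
  have ae2 : forall a : 'I_n, \forall X \ae mu, S X -> X a i = 0.
    move=> a.
    have := ae_transport mu hmu (perm_mx (tperm a i')) (swap_orth a i') _ ae1.
    apply: filterS => X h SX; rewrite -(swap_entry a i' X i); apply: h.
    exact: Sinv (swap_orth a i') X SX.
  have ae3 : \forall X \ae mu, forall a : 'I_n, S X -> X a i = 0.
    exact: filter_forall.
  apply: (ae_S_false mu S mS muS); apply: filterS ae3 => X h SX.
  have := stiefel_col X i SX; rewrite big1 => [|a _]; last by rewrite (h a SX) expr0n.
  by move/eqP; rewrite eq_sym oner_eq0.
have FE : hyp0F1 mu d = \int[mu]_(X in S) expR (P X).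
  by rewrite /hyp0F1 (int_T_S _ _ mS muS).
rewrite FE.
set k2 := fun X : mxBorel R n p => expR (P X) - y X * expR (P X).
have iexpP : mu.-integrable S (EFin \o (fun X => expR (P X))).
  apply: int_bdd => //; exists (expR B) => X SX.
  by rewrite ger0_norm ?expR_ge0 // ePb.
have mk2 : measurable_fun setT k2 := measurable_funB mexpP mg.
have ik2 : mu.-integrable S (EFin \o k2) := intRB _ _ _ _ mS iexpP ig.
have k20 : forall X, S X -> 0 <= k2 X.
  move=> X SX; rewrite /k2 -[X in X - _]mul1r -mulrBl mulr_ge0 ?expR_ge0 //.
  by rewrite subr_ge0; apply: le_trans (ler_norm _) (yb X SX).
have E2 : \int[mu]_(X in S) k2 X =
    \int[mu]_(X in S) expR (P X) - \int[mu]_(X in S) (y X * expR (P X)).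
  by rewrite /k2 RintegralB.
have := Rintegral_ge0 mu k20; rewrite E2 subr_ge0 le_eqVlt => /orP[/eqP hG|//].
exfalso.
have I0 : \int[mu]_(X in S) k2 X = 0 by rewrite E2 hG subrr.
have ae0 := Rint_eq0_ae mu S k2 mS mk2 ik2 k20 I0.
have ae1 : \forall X \ae mu, S X -> y X = 1.
  apply: filterS ae0 => X h SX; have := h SX.
  rewrite /k2 -[X in X - _]mul1r -mulrBl => /eqP; rewrite mulf_eq0 (gt_eqF (expR_gt0 _)) orbF.
  by rewrite subr_eq0 => /eqP <-.
have ae2 : \forall X \ae mu, S X -> y X = -1.
  have := ae_transport mu hmu Qf hQf _ ae1.
  apply: filterS => X h SX; have := h (Sinv _ hQf X SX); rewrite yQ => hy.
  by rewrite -hy opprK.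
apply: (ae_S_false mu S mS muS); apply: filterS2 ae1 ae2 => X h1 h2 SX.
have := h1 SX; rewrite h2 // => e; clear -e; lra.
Qed.
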